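(* If $S$ is an $\varepsilon$-synchronization string, then $\mathrm{RSD}(S[1,i],S[1,j])>1-\varepsilon$ for any $i<j$.
   Context: $\mathrm{ED}$ is the insertion/deletion edit distance. $S[i,j]$ denotes positions $i$ through $j$, $S[i,j)$ positions $i$ through $j-1$, $S(i,j]=S[i+1,j]$; for $i<1$, $S[i,j]=\bot^{-i+1}S[1,j]$ with $\bot\notin\Sigma$. $\mathrm{RSD}(S,S')=\max_{k>0}\frac{\mathrm{ED}(S(|S|-k,|S|],S'(|S'|-k,|S'|])}{2k}$. A string $S\in\Sigma^n$ is an $\varepsilon$-synchronization string ($0<\varepsilon<1$) if for every $1\le i<j<k\le n+1$, $\mathrm{ED}(S[i,j),S[j,k))>(1-\varepsilon)(k-i)$. *)

(* Defs.v *)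
From HB Require Import structures.
From mathcomp Require Import all_boot all_order all_algebra.
From mathcomp Require Import boolp classical_sets reals.
Set Implicit Arguments. Unset Strict Implicit. Unset Printing Implicit Defensive.
Import Order.TTheory GRing.Theory Num.Theory.

Section EditDistance.
Variable T : eqType.

Definition one_edit (x y : seq T) : Prop :=
  exists a b (c : T), (x = a ++ b /\ y = a ++ c :: b) \/ (x = a ++ c :: b /\ y = a ++ b).

Fixpoint reachn (n : nat) (x y : seq T) : Prop :=
  match n with
  | 0 => x = y
  | n'.+1 => exists z, one_edit x z /\ reachn n' z y
  end.

Lemma reachn_cat m n x y z : reachn m x y -> reachn n y z -> reachn (m + n) x z.
Proof.
elim: m x => [|m IH] x /=; first by move=> ->.
by move=> [w [hw hr]] hn; exists w; split=> //; apply: IH.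
Qed.

Lemma reachn_del x : reachn (size x) x [::].
Proof.
elim: x => [|c x IH] //=; exists x; split=> //.
by exists [::], x, c; right.
Qed.

Lemma reachn_ins y : reachn (size y) [::] y.
Proof.
elim/last_ind: y => [|y c IH] //=.
rewrite size_rcons -addn1; apply: (reachn_cat IH) => /=.
exists (rcons y c); split=> //.
by exists y, [::], c; left; rewrite cats0 cats1.
Qed.

Lemma ED_exists x y : exists n, `[< reachn n x y >].
Proof.
exists (size x + size y); apply/asboolP.
exact: reachn_cat (reachn_del x) (reachn_ins y).
Qed.

Definition ED (x y : seq T) : nat := ex_minn (ED_exists x y).
End EditDistance.

(* Strings are 1-indexed: S[i,j) = positions i..j-1. *)
Definition slice {T : Type} (S : seq T) (i j : nat) : seq T :=
  take (j - i) (drop (i - 1) S).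

(* S(|S|-k, |S|] padded on the left with bottom (None) symbols when k > |S|. *)
Definition padsuffix {T : Type} (k : nat) (S : seq T) : seq (option T) :=
  nseq (k - size S) None ++ map Some (drop (size S - k) S).

Section Sync.
Variable R : realType.
Local Open Scope ring_scope.
Local Open Scope classical_set_scope.

Definition RSD {T : eqType} (S S' : seq T) : R :=
  sup [set ((ED (padsuffix k S) (padsuffix k S'))%:R / (2 * k%:R) : R)
      | k in [set k : nat | (0 < k)%N]].

Definition sync_string {T : eqType} (eps : R) (S : seq T) : Prop :=
  0 < eps < 1 /\
  forall i j k : nat, (1 <= i)%N -> (i < j)%N -> (j < k)%N -> (k <= size S + 1)%N ->
    (1 - eps) * (k - i)%:R < (ED (slice S i j) (slice S j k))%:R.
End Sync.

(* Main.v *)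
Require Import Defs.
From HB Require Import structures.
From mathcomp Require Import all_boot all_order all_algebra.
From mathcomp Require Import boolp classical_sets reals.
From mathcomp Require Import zify ring lra.
Import Order.TTheory GRing.Theory Num.Theory.
Definition cN {T : Type} (a : seq (option T)) : nat := count (fun o : option T => ~~ isSome o) a.

Lemma pmap_cons_opt {T : Type} (c : option T) q :
  pmap id (c :: q) = if c is Some c' then c' :: pmap id q else pmap id q.
Proof. by case: c. Qed.

Lemma one_edit_proj (T : eqType) (a z : seq (option T)) : one_edit a z ->
  (pmap id a = pmap id z /\ (cN a <= cN z + 1)%N /\ (cN z <= cN a + 1)%N)
  \/ (one_edit (pmap id a) (pmap id z) /\ cN a = cN z).
Proof.
move=> [p [q [c [[-> ->]|[-> ->]]]]]; rewrite /cN !pmap_cat !count_cat /=;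
case: c => [c|] /=.
- right; split=> //; by exists (pmap id p), (pmap id q), c; left.
- left; split=> //; lia.
- right; split=> //; by exists (pmap id p), (pmap id q), c; right.
- left; split=> //; lia.
Qed.

Lemma reach_proj (T : eqType) n (a b : seq (option T)) : reachn n a b ->
  exists m, reachn m (pmap id a) (pmap id b) /\ (m + (cN a - cN b) <= n)%N.
Proof.
elim: n a => [|n IH] a /=.
  by move=> ->; exists 0%N; split=> //; rewrite subnn.
move=> [z [hz hr]]; have [m [hm hle]] := IH _ hr.
case: (@one_edit_proj T _ _ hz) => [[e [h1 h2]]|[e h]].
- exists m; rewrite e; split=> //; lia.
- exists m.+1; split; first by exists (pmap id z).
  rewrite h; lia.
Qed.

Lemma ED_proj (T : eqType) (a b : seq (option T)) :
  (ED (pmap id a) (pmap id b) + (cN a - cN b) <= ED a b)%N.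
Proof.
rewrite /ED; case: ex_minnP => k _ Hk.
case: ex_minnP => n /asboolP H _.
have [m [hm hle]] := @reach_proj T _ _ _ H.
have := Hk m (asboolT hm); lia.
Qed.

Lemma ED_le (T : eqType) (a b : seq T) : (ED a b <= size a + size b)%N.
Proof.
rewrite /ED; case: ex_minnP => n _ Hn; apply: Hn; apply/asboolP.
exact: reachn_cat (reachn_del a) (reachn_ins b).
Qed.
Local Open Scope ring_scope.

Lemma pmap_some {T : Type} (x : seq T) : pmap id (map Some x) = x.
Proof. by elim: x => //= c x ->. Qed.

Lemma cN_some {T : Type} (x : seq T) : cN (map Some x) = 0%N.
Proof. by elim: x. Qed.

Lemma size_padsuffix {T : Type} k (s : seq T) : size (padsuffix k s) = k.
Proof. rewrite /padsuffix size_cat size_nseq size_map size_drop; lia. Qed.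


Theorem lemma16 (R : realType) (Sigma : eqType) (eps : R) (S : seq Sigma) :
  sync_string eps S ->
  forall i j : nat, (1 <= i)%N -> (i < j)%N -> (j <= size S)%N ->
    1 - eps < RSD R (take i S) (take j S).
Proof.
move=> [/andP[e0 e1] Hs] i j hi hij hj.
set k := (j - i)%N.
have hk : (0 < k)%N by rewrite /k; lia.
have szi : size (take i S) = i by rewrite size_takel //; lia.
have szj : size (take j S) = j by rewrite size_takel.
set a := padsuffix k (take i S); set b := padsuffix k (take j S).
have Hb : pmap id b = slice S i.+1 j.+1 /\ cN b = 0%N.
  rewrite /b /padsuffix szj.
  have -> : (k - j = 0)%N by rewrite /k; lia.
  have -> : (j - k = i)%N by rewrite /k; lia.
  rewrite /= pmap_some cN_some /slice; split=> //.
  rewrite !subSS subn0 take_drop subnK //; lia.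
have EDp := @ED_proj Sigma a b.
move: EDp; rewrite (proj1 Hb) (proj2 Hb) subn0 => EDp.
have key : (1 - eps) * (2 * k%:R) < (ED a b)%:R.
  case: (leqP k i) => hki.
  - have Ha : pmap id a = slice S (i - k).+1 i.+1 /\ cN a = 0%N.
      rewrite /a /padsuffix szi.
      have -> : (k - i = 0)%N by lia.
      rewrite /= pmap_some cN_some /slice; split=> //.
      rewrite subSS take_drop.
      have -> : ((i - k).+1 - 1 = i - k)%N by lia.
      by have -> : (i - (i - k) + (i - k) = i)%N by lia.
    move: EDp; rewrite (proj1 Ha) (proj2 Ha) addn0 => EDp.
    have := Hs (i - k).+1 i.+1 j.+1 isT ltac:(lia) ltac:(lia) ltac:(lia).
    have -> : (j.+1 - (i - k).+1 = 2 * k)%N by rewrite /k; lia.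
    rewrite natrM => h; apply: (lt_le_trans h); by rewrite ler_nat.
  - have Ha : pmap id a = slice S 1 i.+1 /\ cN a = (k - i)%N.
      rewrite /a /padsuffix szi.
      have -> : (i - k = 0)%N by lia.
      rewrite pmap_cat /cN count_cat /= pmap_some.
      have -> : pmap id (nseq (k - i) (@None Sigma)) = [::].
        by elim: (k - i)%N.
      have -> : count (fun o : option Sigma => ~~ isSome o) (map Some (drop 0 (take i S))) = 0%N.
        exact: cN_some.
      rewrite count_nseq /= mul1n addn0 drop0 /slice subSS !subn0 subnn drop0.
      by [].  
    move: EDp; rewrite (proj1 Ha) (proj2 Ha) => EDp.
    have := Hs 1%N i.+1 j.+1 isT ltac:(lia) ltac:(lia) ltac:(lia).
    rewrite subSS subn0 => h.
    have h2 : (ED (slice S 1 i.+1) (slice S i.+1 j.+1))%:R + (k - i)%:R <= (ED a b)%:R :> R.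
      by rewrite -natrD ler_nat.
    have h3 : (2 * k%:R : R) = j%:R + (k - i)%:R.
      by rewrite -natrD -[2]/(2%:R) -natrM; congr (_%:R); rewrite /k; lia.
    have h4 : (0 : R) <= (k - i)%:R by [].
    rewrite h3; nra.
have hk0 : (0 : R) < 2 * k%:R by rewrite mulr_gt0 // ltr0n.
apply: (@lt_le_trans _ _ ((ED a b)%:R / (2 * k%:R))).
  by rewrite ltr_pdivlMr.
apply: ub_le_sup; last by exists k.
exists 1 => _ [k' /= hk' <-].
have hk'0 : (0 : R) < 2 * k'%:R by rewrite mulr_gt0 // ltr0n.
rewrite ler_pdivrMr // mul1r.
have := @ED_le _ (padsuffix k' (take i S)) (padsuffix k' (take j S)).
rewrite !size_padsuffix -(ler_nat R) natrD => h; apply: (le_trans h).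
by rewrite -mulr2n mulr_natl.
Qed.
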